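(* Let $T$ be a Galton–Watson tree with finite alphabet $\mathbb{A}$ and offspring distribution $W$ with $m=\mathbb{E}|W|>1$. For integers $k,a>0$ define $g_{k,a}(s)=\mathbb{P}(Z_k^{(s)}<a)$ for $s\in[0,1]$. Let $(a_k)_{k\in\mathbb{N}}$ be positive integers with $\limsup_{k\to\infty}a_k^{1/k}<m$. Then $g_{k,a_k}(s)\to\mathbb{P}(\text{extinction})$ as $k\to\infty$, for every $s\in(0,1)$.
   Context: The Galton–Watson tree with offspring distribution $W$ (random subset of $\mathbb{A}$, $\mathbb{P}(i\in W)>0$ for all $i$) is $T_0=\{\emptyset\}$, $T_n=\{aj:a\in T_{n-1},j\in W_a\}$, $(W_a)$ independent copies of $W$; extinction means $T_n=\emptyset$ for some $n$. $T_k^{(s)}=T_k\cap Y$ where $Y\subseteq\mathbb{A}^k$ is independent of $T$ with $\mathbb{P}(Y=B)=(1-s)^{|B|}s^{|\mathbb{A}^k\setminus B|}$; $Z_k^{(s)}=|T_k^{(s)}|$. *)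

(* Defs.v *)
From HB Require Import structures.
From mathcomp Require Import all_boot all_order all_algebra.
From mathcomp Require Import all_classical all_reals all_analysis.
Set Implicit Arguments. Unset Strict Implicit. Unset Printing Implicit Defensive.
Import Order.TTheory GRing.Theory Num.Theory.
Local Open Scope ring_scope.
Local Open Scope classical_set_scope.

(* Galton--Watson tree over a finite alphabet A, built from a family of
   offspring sets W : seq A -> Omega -> {set A} (W a = W_a, one per word a). *)
Fixpoint GW_level (A : finType) (Omega : Type) (W : seq A -> Omega -> {set A})
    (n : nat) (w : Omega) : {set n.-tuple A} :=
  match n return {set n.-tuple A} with
  | 0 => [set [tuple]]
  | n'.+1 => [set t : n'.+1.-tuple A |
      [exists a : n'.-tuple A, exists j : A,
        [&& a \in GW_level W n' w, j \in W (val a) w & val t == rcons (val a) j]]]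
  end.

Definition GW_extinct (A : finType) (Omega : Type) (W : seq A -> Omega -> {set A})
  : set Omega := [set w | exists n, GW_level W n w = finset.set0].

Definition mean_offspring (R : realType) (A : finType) (p : {set A} -> R) : R :=
  \sum_(S : {set A}) p S * #|S|%:R.

(* (W_a)_a are independent, each with law p: for pairwise distinct words
   a_1..a_r and sets S_1..S_r, P(W_{a_i} = S_i for all i) = prod p(S_i). *)
Definition iid_offspring d (Omega : measurableType d) (R : realType)
  (P : probability Omega R) (A : finType) (p : {set A} -> R)
  (W : seq A -> Omega -> {set A}) : Prop :=
  forall l : seq (seq A * {set A}), uniq (map fst l) ->
    P [set w | forall x, x \in l -> W x.1 w = x.2] = (\prod_(x <- l) p x.2)%:E.

(* Y is independent of (W_a)_a and P(Y = B) = (1-s)^|B| s^|A^k \ B| *)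
Definition site_percolation_indep d (Omega : measurableType d) (R : realType)
  (P : probability Omega R) (A : finType) (p : {set A} -> R)
  (W : seq A -> Omega -> {set A}) (s : R) (k : nat)
  (Y : Omega -> {set k.-tuple A}) : Prop :=
  forall (B : {set k.-tuple A}) (l : seq (seq A * {set A})), uniq (map fst l) ->
    P ([set w | Y w = B] `&` [set w | forall x, x \in l -> W x.1 w = x.2]) =
    ((1 - s) ^+ #|B| * s ^+ #|~: B| * \prod_(x <- l) p x.2)%:E.

(* Main.v *)
Require Import Defs.
From HB Require Import structures.
From mathcomp Require Import all_boot all_order all_algebra.
From mathcomp Require Import all_classical all_reals all_analysis.
Import Order.TTheory GRing.Theory Num.Theory.
Import numFieldNormedType.Exports.
Local Open Scope ring_scope.
Local Open Scope classical_set_scope.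
From mathcomp Require Import lra ring zify.

Set Implicit Arguments. Unset Strict Implicit.
Local Open Scope classical_set_scope.

Lemma powle (R : realType) n (x y : R) : 0 <= x -> x <= y -> x ^+ n <= y ^+ n.
Proof.
move=> x0 xy; apply: lerXn2r => //; rewrite nnegrE //; exact: le_trans xy.
Qed.

Section Esum.
Variables (R : realType) (A : finType) (p : {set A} -> R).
Hypothesis p_ge0 : forall S, 0 <= p S.
Hypothesis p_sum1 : \sum_(S : {set A}) p S = 1.

Definition upd (x : seq A) (S : {set A}) (g : seq A -> {set A}) :=
  fun y => if y == x then S else g y.

Fixpoint Esum (L : seq (seq A)) (F : (seq A -> {set A}) -> R) : R :=
  match L with
  | [::] => F (fun _ => finset.set0)
  | x :: L' => \sum_(S : {set A}) p S * Esum L' (fun g => F (upd x S g))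
  end.

Lemma Esum_ext L F G : (forall g, F g = G g) -> Esum L F = Esum L G.
Proof.
elim: L F G => [|x L IH] F G H /=; first exact: H.
by apply: eq_bigr => S _; congr (_ * _); apply: IH => g; exact: H.
Qed.

Lemma Esum_scale L c F : Esum L (fun g => c * F g) = c * Esum L F.
Proof.
elim: L F => [|x L IH] F //=; rewrite mulr_sumr; apply: eq_bigr => S _.
by rewrite (IH (fun g => F (upd x S g))) mulrCA.
Qed.

Lemma Esum_sum L (I : Type) (r : seq I) (F : I -> (seq A -> {set A}) -> R) :
  Esum L (fun g => \sum_(i <- r) F i g) = \sum_(i <- r) Esum L (F i).
Proof.
elim: L F => [|x L IH] F //=.
under eq_bigr => S _ do rewrite (IH (fun i g => F i (upd x S g))) mulr_sumr.
by rewrite exchange_big.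
Qed.

Lemma Esum_le L F G : (forall g, F g <= G g) -> Esum L F <= Esum L G.
Proof.
elim: L F G => [|x L IH] F G H /=; first exact: H.
apply: ler_sum => S _; apply: ler_wpM2l => //; apply: IH => g; exact: H.
Qed.

Lemma Esum_const L c : Esum L (fun _ => c) = c.
Proof.
elim: L => [|x L IH] //=; under eq_bigr => S _ do rewrite IH.
by rewrite -mulr_suml p_sum1 mul1r.
Qed.

Lemma Esum_ge0 L F : (forall g, 0 <= F g) -> 0 <= Esum L F.
Proof. by move=> H; rewrite -(Esum_const L 0); apply: Esum_le. Qed.

Definition merge (L1 : seq (seq A)) (g1 g2 : seq A -> {set A}) :=
  fun y => if y \in L1 then g1 y else g2 y.

Lemma Esum_cat L1 L2 F : Esum (L1 ++ L2) F =
  Esum L1 (fun g1 => Esum L2 (fun g2 => F (merge L1 g1 g2))).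
Proof.
elim: L1 F => [|x L1 IH] F /=.
  by apply: Esum_ext => g2; congr F; apply/funext => y; rewrite /merge in_nil.
apply: eq_bigr => S _; congr (_ * _); rewrite IH; apply: Esum_ext => g1.
apply: Esum_ext => g2; congr F; apply/funext => y.
by rewrite /merge /upd in_cons; case: (y == x).
Qed.

Lemma Esum_prod L (h : seq A -> {set A} -> R) : uniq L ->
  Esum L (fun g => \prod_(x <- L) h x (g x)) = \prod_(x <- L) \sum_S p S * h x S.
Proof.
elim: L => [|x L IH] /=; first by rewrite !big_nil.
case/andP => xL uL; rewrite big_cons mulr_suml; apply: eq_bigr => S _.
rewrite -mulrA; congr (_ * _).
rewrite -IH // -Esum_scale; apply: Esum_ext => g; rewrite big_cons /upd eqxx.
congr (_ * _); apply: eq_big_seq => y yL; case: eqP => // yx.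
by rewrite -yx yL in xL.
Qed.

Definition f (u : R) := \sum_(S : {set A}) p S * u ^+ #|S|.
Definition mm := \sum_(S : {set A}) p S * #|S|%:R.
Definition KK := \sum_(S : {set A}) p S * #|S|%:R ^+ 2.

Lemma f_ge0 u : 0 <= u -> 0 <= f u.
Proof. by move=> u0; apply: sumr_ge0 => S _; rewrite mulr_ge0 // exprn_ge0. Qed.

Lemma f_le1 u : 0 <= u -> u <= 1 -> f u <= 1.
Proof.
move=> u0 u1; rewrite -p_sum1; apply: ler_sum => S _.
by rewrite -{2}(mulr1 (p S)); apply: ler_wpM2l => //; apply: exprn_ile1.
Qed.

Lemma f_mono u v : 0 <= u -> u <= v -> f u <= f v.
Proof.
move=> u0 uv; apply: ler_sum => S _; apply: ler_wpM2l => //; exact: powle.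
Qed.

Lemma f1 : f 1 = 1.
Proof. by rewrite /f; under eq_bigr => S _ do rewrite expr1n mulr1. Qed.

Lemma iter_f01 n u : 0 <= u -> u <= 1 -> 0 <= iter n f u /\ iter n f u <= 1.
Proof.
move=> u0 u1; elim: n => [|n [h0 h1]] //=; split; [exact: f_ge0|exact: f_le1].
Qed.

Lemma iter_mono n u v : 0 <= u -> u <= v -> iter n f u <= iter n f v.
Proof.
move=> u0 uv; elim: n => [|n IH] //=; apply: f_mono => //.
elim: n {IH} => [|n IH] //=; exact: f_ge0.
Qed.

Lemma bern_up n (x : R) : 0 <= x -> x <= 1 ->
  (1 - x) ^+ n <= 1 - n%:R * x + (n%:R * x) ^+ 2.
Proof.
move=> x0 x1; elim: n => [|n IH]; first by rewrite expr0 mul0r subr0 expr0n /= addr0.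
rewrite exprS; apply: le_trans (_ : (1 - x) * (1 - n%:R * x + (n%:R * x) ^+ 2) <= _).
  by apply: ler_wpM2l => //; lra.
have n0 : 0 <= n%:R :> R by [].
rewrite -natr1; nra.
Qed.

Lemma bern_lo n (x : R) : 0 <= x -> x <= 1 -> 1 - n%:R * x <= (1 - x) ^+ n.
Proof.
move=> x0 x1; elim: n => [|n IH]; first by rewrite expr0 mul0r subr0.
rewrite exprS; apply: le_trans (_ : (1 - x) * (1 - n%:R * x) <= _); last first.
  by apply: ler_wpM2l => //; lra.
have n0 : 0 <= n%:R :> R by [].
rewrite -natr1; nra.
Qed.

Lemma phi_lb x : 0 <= x -> x <= 1 -> mm * x - KK * x ^+ 2 <= 1 - f (1 - x).
Proof.
move=> x0 x1.
have -> : 1 - f (1 - x) = \sum_S p S * (1 - (1 - x) ^+ #|S|).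
  by rewrite -{1}p_sum1 /f -sumrB; apply: eq_bigr => S _; rewrite mulrBr mulr1.
rewrite /mm /KK !mulr_suml -sumrB; apply: ler_sum => S _.
rewrite -!mulrA -mulrBr; apply: ler_wpM2l => //.
have := @bern_up #|S| x x0 x1; rewrite exprMn; lra.
Qed.

Definition DD u v := \sum_(S : {set A}) p S *
  \sum_(i < #|S|) v ^+ (#|S|.-1 - i) * u ^+ i.

Lemma f_sub u v : f v - f u = (v - u) * DD u v.
Proof.
rewrite /f /DD -sumrB mulr_sumr; apply: eq_bigr => S _.
by rewrite -mulrBr subrXX mulrCA.
Qed.

Lemma DD_mono u v u' v' : 0 <= u -> u <= u' -> 0 <= v -> v <= v' ->
  DD u v <= DD u' v'.
Proof.
move=> u0 uu v0 vv; apply: ler_sum => S _; apply: ler_wpM2l => //.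
apply: ler_sum => i _; apply: ler_pM; rewrite ?exprn_ge0 //; exact: powle.
Qed.

Lemma DD_ge0 u v : 0 <= u -> 0 <= v -> 0 <= DD u v.
Proof.
move=> u0 v0; apply: sumr_ge0 => S _; apply: mulr_ge0 => //.
by apply: sumr_ge0 => i _; rewrite mulr_ge0 // exprn_ge0.
Qed.

Lemma DD11 : DD 1 1 = mm.
Proof.
apply: eq_bigr => S _; congr (_ * _).
under eq_bigr => i _ do rewrite !expr1n mulr1.
by rewrite sumr_const card_ord.
Qed.

End Esum.

Unset Implicit Arguments.
Local Open Scope classical_set_scope.

Section Anal.
Variables (R : realType) (A : finType) (p : {set A} -> R).
Hypothesis p_ge0 : forall S, 0 <= p S.
Hypothesis p_sum1 : \sum_(S : {set A}) p S = 1.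
Local Notation f := (f p).

Lemma growth (m' d x : R) : 1 <= m' -> 0 < d -> d <= 1 ->
  (forall z, 0 <= z -> z <= d -> m' * z <= 1 - f (1 - z)) ->
  0 <= x -> x <= 1 -> forall j, d <= m' ^+ j * x -> iter j f (1 - x) <= 1 - d.
Proof.
move=> m1 d0 d1 Hphi x0 x1.
have H : forall j, 0 <= 1 - iter j f (1 - x) <= 1 /\
   (d <= 1 - iter j f (1 - x) \/ m' ^+ j * x <= 1 - iter j f (1 - x)).
  elim => [|j [/andP[z0 z1] IH]] /=.
    by rewrite expr0 mul1r; split; [apply/andP; split; lra| right; lra].
  set z := 1 - iter j f (1 - x) in z0 z1 IH *.
  have iz : iter j f (1 - x) = 1 - z by rewrite /z; ring.
  rewrite iz.
  have [fz0 fz1] : 0 <= f (1 - z) /\ f (1 - z) <= 1.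
    by split; [apply: f_ge0 => //; lra|apply: f_le1 => //; lra].
  split; first by apply/andP; split; lra.
  case: (lerP d z) => dz.
  - left.
    have : f (1 - z) <= f (1 - d) by apply: f_mono => //; lra.
    have := Hphi d (ltW d0) (lexx d); nra.
  - case: IH => IH; first by lra.
    right; have := Hphi z z0 (ltW dz); rewrite exprS -mulrA.
    move=> h; apply: le_trans h; apply: ler_wpM2l => //; lra.
move=> j dj; case: (H j) => _ [] h; lra.
Qed.

Lemma phi_bound m' : m' < mm p ->
  let d := Order.min 1 ((mm p - m') / (KK p + 1)) in
  0 < d /\ d <= 1 /\
  (forall z, 0 <= z -> z <= d -> m' * z <= 1 - f (1 - z)).
Proof.
move=> mm' d.
have K0 : 0 <= KK p by apply: sumr_ge0 => S _; rewrite mulr_ge0 // exprn_ge0.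
have dd : (mm p - m') / (KK p + 1) * (KK p + 1) = mm p - m'.
  by rewrite divfK //; apply: lt0r_neq0; lra.
have dpos : 0 < (mm p - m') / (KK p + 1) by apply: divr_gt0; lra.
split; first by rewrite /d lt_min ltr01 dpos.
split; first by rewrite /d ge_min lexx.
move=> z z0 zd.
have z1 : z <= 1 by move: zd; rewrite /d le_min => /andP[].
have z2 : z <= (mm p - m') / (KK p + 1) by move: zd; rewrite /d le_min => /andP[].
have := phi_lb p_ge0 p_sum1 z0 z1.
set e := (mm p - m') / (KK p + 1) in dd dpos z2 *.
have h1 : KK p * z <= KK p * e by apply: ler_wpM2l.
have dd' : KK p * e + e = mm p - m' by rewrite -dd; ring.
have : KK p * z <= mm p - m' by lra.
move=> h4 h5.
have h3 : KK p * z ^+ 2 <= (mm p - m') * z by rewrite expr2 mulrA; apply: ler_wpM2r.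
lra.
Qed.

Lemma contract_iter q y : 0 <= q -> q <= 1 -> f q = q -> 0 <= y -> y <= 1 -> f y < y ->
  forall e, 0 < e -> exists r, iter r f y <= q + e.
Proof.
move=> q0 q1 fq y0 y1 fy e e0.
case: (lerP y q) => yq; first by exists 0%N => /=; lra.
set rho := DD p q y.
have Hr : f y - f q = (y - q) * rho by rewrite f_sub.
have r0 : 0 <= rho by apply: DD_ge0.
have r1 : rho < 1.
  rewrite fq in Hr; rewrite ltNge; apply/negP => r1.
  have : (y - q) * 1 <= (y - q) * rho by apply: ler_wpM2l => //; lra.
  lra.
have H : forall r, q <= iter r f y <= y /\ iter r f y - q <= (y - q) * rho ^+ r.
  elim => [|r [/andP[z0 z1] IH]] /=; first by rewrite expr0 mulr1 lexx ltW.
  set z := iter r f y in z0 z1 IH *.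
  have Hz : f z - f q = (z - q) * DD p q z by rewrite f_sub.
  have Dz : DD p q z <= rho by apply: DD_mono => //; lra.
  have Dz0 : 0 <= DD p q z by apply: DD_ge0 => //; lra.
  rewrite fq in Hz.
  have h1 : f z - q <= (z - q) * rho by rewrite Hz; apply: ler_wpM2l; lra.
  have h2 : (z - q) * rho <= (y - q) * rho ^+ r * rho by apply: ler_wpM2r; lra.
  split; last by rewrite exprSr mulrA; lra.
  have : q <= f z by rewrite -{1}fq; apply: f_mono => //.
  move=> qz; apply/andP; split => //; nra.
have /cvgrPdist_lt/(_ e e0) := @cvg_expr R rho (ltac:(rewrite ger0_norm //)).
case => N _ HN; exists N; have := HN N (leqnn N).
rewrite sub0r normrN ger0_norm ?exprn_ge0 // => hN.
case: (H N) => _ h; have : (y - q) * rho ^+ N <= rho ^+ N.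
  rewrite -{2}(mul1r (rho ^+ N)); apply: ler_wpM2r; rewrite ?exprn_ge0 //; lra.
lra.
Qed.

End Anal.

Set Implicit Arguments. Unset Strict Implicit.

Local Close Scope classical_set_scope.
Section GW.
Variable (A : finType).

Definition Tg (g : seq A -> {set A}) k : {set k.-tuple A} :=
  GW_level (fun x (_ : unit) => g x) k tt.

Definition lev k : seq (seq A) := map val (enum {: k.-tuple A}).

Fixpoint words_lt k : seq (seq A) :=
  match k with 0 => [::] | k'.+1 => words_lt k' ++ lev k' end.

Lemma mem_lev k x : (x \in lev k) = (size x == k).
Proof.
apply/mapP/eqP => [[t _ ->]|sx]; first exact: size_tuple.
have sx' : size x == k by apply/eqP.
by exists (Tuple sx'); rewrite ?mem_enum.
Qed.

Lemma uniq_lev k : uniq (lev k).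
Proof. by rewrite map_inj_uniq ?enum_uniq //; exact: val_inj. Qed.

Lemma mem_words_lt k x : (x \in words_lt k) = (size x < k)%N.
Proof.
elim: k => [|k IH] //=; rewrite mem_cat IH mem_lev ltnS [in RHS]leq_eqVlt.
by rewrite orbC.
Qed.

Lemma uniq_words_lt k : uniq (words_lt k).
Proof.
elim: k => [|k IH] //=; rewrite cat_uniq IH uniq_lev /= andbT.
apply/hasPn => x; rewrite mem_lev /= mem_words_lt => /eqP ->.
by rewrite ltnn.
Qed.

Lemma Tg_succ g k : Tg g k.+1 = [set t : k.+1.-tuple A |
      [exists a : k.-tuple A, exists j : A,
        [&& a \in Tg g k, j \in g (val a) & val t == rcons (val a) j]]].
Proof. by []. Qed.

Lemma Tg_dep k g g' : {in words_lt k, g =1 g'} -> Tg g k = Tg g' k.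
Proof.
elim: k => [|k IH] H //.
rewrite !Tg_succ IH; last first.
  by move=> x; rewrite mem_words_lt => xk; apply: H; rewrite mem_words_lt ltnW.
apply/setP => t; rewrite !inE; apply: eq_existsb => a; apply: eq_existsb => j.
by rewrite H // mem_words_lt size_tuple.
Qed.

Lemma GW_Tg (Omega : Type) (W : seq A -> Omega -> {set A}) k w :
  GW_level W k w = Tg (fun x => W x w) k.
Proof.
elim: k => [|k IH] //; rewrite Tg_succ -IH //.
Qed.

Definition rct k (a : k.-tuple A) (j : A) : k.+1.-tuple A := Tuple (rcons_tupleP a j).

Lemma card_Tg_succ g k : #|Tg g k.+1| = (\sum_(a in Tg g k) #|g (val a)|)%N.
Proof.
have -> : Tg g k.+1 = [set rct aj.1 aj.2 | aj in
            [pred aj : k.-tuple A * A | (aj.1 \in Tg g k) && (aj.2 \in g (val aj.1))]]%SET.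
  apply/setP => t; rewrite Tg_succ inE; apply/existsP/imsetP.
    case=> a /existsP[j /and3P[aT jg /eqP tE]]; exists (a, j); first by rewrite inE /= aT.
    by apply: val_inj; rewrite tE.
  case=> [[a j]]; rewrite inE /= => /andP[aT jg] ->; exists a; apply/existsP; exists j.
  by rewrite aT jg /=.
rewrite card_imset; last first.
  by move=> [a j] [a' j'] /(congr1 val) /= /rcons_inj [/val_inj -> ->].
transitivity (\sum_(a | a \in Tg g k) \sum_(j | j \in g (val a)) 1)%N.
  rewrite pair_big_dep /= -sum1_card; apply: eq_bigl => [[a j]] /=.
  by rewrite inE.
by apply: eq_bigr => a _; rewrite sum1_card.
Qed.

End GW.

Set Implicit Arguments. Unset Strict Implicit.
Local Close Scope classical_set_scope.

Section GE.
Variables (R : realType) (A : finType) (p : {set A} -> R).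
Hypothesis p_ge0 : forall S, 0 <= p S.
Hypothesis p_sum1 : \sum_(S : {set A}) p S = 1.

Lemma E_succ k u : Esum p (words_lt A k.+1) (fun g => u ^+ #|Tg g k.+1|) =
  Esum p (words_lt A k) (fun g => (f p u) ^+ #|Tg g k|).
Proof.
rewrite [words_lt _ k.+1]/= Esum_cat; apply: Esum_ext => g1.
set T := Tg g1 k.
have E2 : forall g2, u ^+ #|Tg (merge (words_lt A k) g1 g2) k.+1| =
   \prod_(x <- lev A k) (if x \in map val (enum T) then u ^+ #|g2 x| else 1).
  move=> g2; rewrite card_Tg_succ.
  rewrite (@Tg_dep _ k _ g1); last by move=> x xw; rewrite /merge xw.
  rewrite -prodrXr /lev big_map big_enum /= big_mkcond /=.
  apply: eq_bigr => a _; rewrite (mem_map val_inj) mem_enum.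
  case: (a \in T) => //.
  by rewrite /merge mem_words_lt size_tuple ltnn.
rewrite (Esum_ext _ _ E2) (Esum_prod p (fun x S => if x \in map val (enum T) then u ^+ #|S| else 1)) ?uniq_lev //.
rewrite -prodr_const [RHS]big_mkcond /lev big_map big_enum /=.
apply: eq_bigr => a _; rewrite (mem_map val_inj) mem_enum.
case: (a \in T) => //.
by under eq_bigr => S _ do rewrite mulr1.
Qed.

Lemma E_iter k u : Esum p (words_lt A k) (fun g => u ^+ #|Tg g k|) = iter k (f p) u.
Proof.
elim: k u => [|k IH] u.
  by rewrite /= /Tg /= cards1 expr1.
by rewrite E_succ IH iterSr.
Qed.

End GE.

Lemma prod_if_split (R : realType) (X : finType) (B : {set X}) (al be : X -> R) :
  \prod_x (if x \in B then al x else be x) =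
  \prod_(x in B) al x * \prod_(x in ~: B) be x.
Proof.
rewrite (bigID (mem B)) /=; congr (_ * _).
  by apply: eq_big => x //= ->.
by apply: eq_big => x; rewrite ?inE //= => /negbTE ->.
Qed.

Lemma sum_prod_if (R : realType) (X : finType) (al be : X -> R) :
  \sum_(B : {set X}) \prod_x (if x \in B then al x else be x) =
  \prod_x (al x + be x).
Proof.
rewrite (eq_bigr (fun x => \sum_(b : bool) (if b then al x else be x))); last first.
  by move=> x _; rewrite big_bool.
rewrite bigA_distr_bigA /=.
rewrite (reindex (fun B : {set X} => [ffun x => x \in B])) /=; last first.
  exists (fun phi : {ffun X -> bool} => [set x | phi x]) => [B _|phi _].
    by apply/setP => x; rewrite inE ffunE.
  by apply/ffunP => x; rewrite ffunE inE.
by apply: eq_bigr => B _; apply: eq_bigr => x _; rewrite ffunE.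
Qed.

Lemma perc_sum (R : realType) (X : finType) (T : {set X}) (s t : R) :
  \sum_(B : {set X}) (1 - s) ^+ #|B| * s ^+ #|~: B| * t ^+ #|T :&: B| =
  (s + (1 - s) * t) ^+ #|T|.
Proof.
pose al x := (1 - s) * (if x \in T then t else 1).
transitivity (\prod_x (al x + s)); last first.
  rewrite -prodr_const [RHS]big_mkcond; apply: eq_bigr => x _; rewrite /al.
  by case: (x \in T); [rewrite addrC|rewrite mulr1 subrK].
rewrite -sum_prod_if; apply: eq_bigr => B _.
rewrite prod_if_split prodr_const mulrAC; congr (_ * _).
rewrite /al big_split /= prodr_const; congr (_ * _).
rewrite -prodr_const [RHS]big_mkcond [LHS]big_mkcond; apply: eq_bigr => x _.
by rewrite inE; case: (x \in T); case: (x \in B).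
Qed.

Set Implicit Arguments. Unset Strict Implicit.
Local Open Scope classical_set_scope.

Section Prob.
Variables (R : realType) (d : measure_display) (Omega : measurableType d)
  (P : probability Omega R) (A : finType) (p : {set A} -> R)
  (W : seq A -> Omega -> {set A}).
Hypothesis mW : forall (x : seq A) (S : {set A}), measurable [set w | W x w = S].

Definition cond (l : seq (seq A * {set A})) : set Omega :=
  [set w | forall x, x \in l -> W x.1 w = x.2].

Definition over (l : seq (seq A * {set A})) (g : seq A -> {set A}) :=
  foldr (fun xS h => upd xS.1 xS.2 h) g l.

Definition dep (Ls : seq (seq A)) (Pr : (seq A -> {set A}) -> bool) :=
  forall g g', {in Ls, g =1 g'} -> Pr g = Pr g'.

Lemma cond_cons x S l : cond ((x, S) :: l) = [set w | W x w = S] `&` cond l.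
Proof.
apply/seteqP; split => w /=.
  move=> H; split; first exact: (H (x, S) (mem_head _ _)).
  by move=> y yl; apply: H; rewrite in_cons yl orbT.
by case=> h1 h2 y; rewrite in_cons => /orP[/eqP ->|] //; exact: h2.
Qed.

Lemma mcond l : measurable (cond l).
Proof.
elim: l => [|[x S] l IH].
  by rewrite (_ : cond [::] = setT) //; apply/seteqP; split => w //=.
by rewrite cond_cons; apply: measurableI.
Qed.

Lemma over_agree l g w : cond l w -> forall y, y \in map fst l -> W y w = over l g y.
Proof.
elim: l => [|[x S] l IH] //=; rewrite cond_cons => -[wx wl] y.
rewrite in_cons /upd /=; case: eqP => [->|_] //= yl; exact: IH.
Qed.

Lemma over_upd l x S g : x \notin map fst l ->
  forall y, over l (upd x S g) y = upd x S (over l g) y.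
Proof.
elim: l => [|[z T] l IH] //=; rewrite in_cons negb_or => /andP[xz xl] y.
rewrite /upd /= -/(upd _ _ _) IH // /upd.
case: (eqVneq y z) => [->|yz]; last by [].
by rewrite eq_sym (negbTE xz).
Qed.

Lemma meas_Pr L l Pr : dep (L ++ map fst l) Pr ->
  measurable (cond l `&` [set w | Pr (fun x => W x w)]).
Proof.
elim: L l Pr => [|x L IH] l Pr H /=.
  have E : forall w, cond l w -> Pr (fun x => W x w) = Pr (over l (fun _ => finset.set0)).
    move=> w cw; apply: H => y yl; exact: over_agree.
  case: (boolP (Pr (over l (fun _ => finset.set0)))) => h.
    rewrite (_ : _ `&` _ = cond l); first exact: mcond.
    apply/seteqP; split => w /=; first by case.
    by move=> cw; split => //; rewrite E.
  rewrite (_ : _ `&` _ = set0) //.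
  apply/seteqP; split => w //= [cw]; rewrite E // => h'; by rewrite h' in h.
rewrite (_ : _ `&` _ = \big[setU/set0]_(S <- enum {: {set A}})
                        (cond ((x, S) :: l) `&` [set w | Pr (fun x => W x w)])).
  apply: bigsetU_measurable => S _; apply: IH => g g' hg; apply: H => y yL.
  apply: hg; move: yL; rewrite !mem_cat /= !in_cons.
  by case: (y == x); rewrite ?orbT //= => /orP[] ->; rewrite ?orbT.
rewrite -bigcup_seq; apply/seteqP; split => w /=.
  case=> cw pw; exists (W x w); first by rewrite /= mem_enum.
  by rewrite cond_cons.
by case=> S _; rewrite cond_cons => -[[_ cw] pw].
Qed.

Lemma P_bigU (I : choiceType) (r : seq I) (E : I -> set Omega) : uniq r ->
  (forall i, measurable (E i)) -> (forall i j, i != j -> E i `&` E j = set0) ->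
  P (\big[setU/set0]_(i <- r) E i) = (\sum_(i <- r) P (E i))%E.
Proof.
move=> ur mE dE; elim: r ur => [|x r IH] /=; first by rewrite !big_nil measure0.
case/andP => xr ur; rewrite !big_cons.
have mU : measurable (\big[setU/set0]_(i <- r) E i) by exact: bigsetU_measurable.
have dj : E x `&` \big[setU/set0]_(i <- r) E i = set0.
  rewrite -bigcup_seq; apply/seteqP; split => w //= [Ew [i /= ir Ei]].
  have xi : x != i by apply: contraNneq xr => ->.
  have := dE x i xi; move/seteqP => [h _]; exact: h w (conj Ew Ei).
rewrite measureU //; exact: (congr1 (fun z => (P (E x) + z)%E) (IH ur)).
Qed.

Variables (s : R) (k : nat) (Yk : Omega -> {set k.-tuple A}).
Hypothesis mY : forall B, measurable [set w | Yk w = B].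
Hypothesis indep : site_percolation_indep P p W s Yk.

Definition wt (B : {set k.-tuple A}) := (1 - s) ^+ #|B| * s ^+ #|~: B|.

Lemma prob_Pr L l B Pr : uniq L -> uniq (map fst l) ->
  (forall x, x \in L -> x \notin map fst l) -> dep (L ++ map fst l) Pr ->
  P ([set w | Yk w = B] `&` cond l `&` [set w | Pr (fun x => W x w)]) =
  (wt B * \prod_(x <- l) p x.2 * Esum p L (fun g => (Pr (over l g))%:R))%:E.
Proof.
elim: L l Pr => [|x L IH] l Pr uL ul Ll H /=.
  have E : forall w, cond l w -> Pr (fun x => W x w) = Pr (over l (fun _ => finset.set0)).
    move=> w cw; apply: H => y yl; exact: over_agree.
  case: (boolP (Pr (over l (fun _ => finset.set0)))) => h.
    rewrite (_ : _ `&` _ = [set w | Yk w = B] `&` cond l); last first.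
      apply/seteqP; split => w /=; first by case.
      by move=> [yw cw]; split => //; rewrite E.
    by rewrite indep // mulr1.
  rewrite (_ : _ `&` _ = set0); last first.
    apply/seteqP; split => w //= [[_ cw]]; rewrite E // => h'; by rewrite h' in h.
  by rewrite measure0 mulr0.
move: uL; rewrite /= => /andP[xL uL].
have xl : x \notin map fst l by apply: Ll; rewrite mem_head.
rewrite (_ : _ `&` _ = \big[setU/set0]_(S <- enum {: {set A}})
   ([set w | Yk w = B] `&` cond ((x, S) :: l) `&` [set w | Pr (fun x => W x w)])).
  rewrite P_bigU ?enum_uniq //; first last.
  - move=> S S' SS'; apply/seteqP; split => w //=.
    rewrite !cond_cons => -[[[_ [h1 _]] _] [[_ [h2 _]] _]].
    by move: SS'; rewrite -h1 -h2 eqxx.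
  - move=> S; rewrite -setIA; apply: measurableI => //.
    apply: (@meas_Pr L) => g g' hg; apply: H => y yL.
    apply: hg; move: yL; rewrite !mem_cat /= !in_cons.
    by case: (y == x); rewrite ?orbT //= => /orP[] ->; rewrite ?orbT.
  rewrite (eq_bigr (fun S => (wt B * \prod_(y <- (x, S) :: l) p y.2 *
      Esum p L (fun g => (Pr (over ((x, S) :: l) g))%:R))%:E)); last first.
    move=> S _; apply: IH => //=.
    - by rewrite xl.
    - move=> y yL; rewrite in_cons negb_or Ll ?andbT; last by rewrite in_cons yL orbT.
      by apply: contraNneq xL => <-.
    - move=> g g' hg; apply: H => y yL.
      apply: hg; move: yL; rewrite !mem_cat /= !in_cons.
      by case: (y == x); rewrite ?orbT //= => /orP[] ->; rewrite ?orbT.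
  rewrite sumEFin big_enum /=; congr EFin.
  rewrite !mulr_sumr; apply: eq_bigr => S _; rewrite big_cons /=.
  rewrite (@Esum_ext _ _ p L (fun g => (Pr (over l (upd x S g)))%:R)
    (fun g => (Pr (upd x S (over l g)))%:R)); first by ring.
  move=> g; congr (_%:R); congr Pr; apply/funext => y; exact: over_upd.
rewrite -bigcup_seq; apply/seteqP; split => w /=.
  case=> -[yw cw] pw; exists (W x w); first by rewrite /= mem_enum.
  by rewrite cond_cons.
by case=> S _; rewrite cond_cons => -[[yw [_ cw]] pw].
Qed.

Lemma prob_event (Pr : {set k.-tuple A} -> (seq A -> {set A}) -> bool) :
  (forall B, dep (words_lt A k) (Pr B)) ->
  measurable [set w | Pr (Yk w) (fun x => W x w)] /\
  P [set w | Pr (Yk w) (fun x => W x w)] =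
  (\sum_B wt B * Esum p (words_lt A k) (fun g => (Pr B g)%:R))%:E.
Proof.
move=> H.
have -> : [set w | Pr (Yk w) (fun x => W x w)] =
   \big[setU/set0]_(B <- enum {: {set k.-tuple A}})
     ([set w | Yk w = B] `&` cond [::] `&` [set w | Pr B (fun x => W x w)]).
  rewrite -bigcup_seq; apply/seteqP; split => w /=.
    by move=> pw; exists (Yk w); rewrite /= ?mem_enum.
  by case=> B _ [[<- _]].
have mE : forall B, measurable
    ([set w | Yk w = B] `&` cond [::] `&` [set w | Pr B (fun x => W x w)]).
  move=> B; rewrite -setIA; apply: measurableI => //.
  by apply: (@meas_Pr (words_lt A k)); rewrite cats0.
split; first exact: bigsetU_measurable.
rewrite P_bigU ?enum_uniq //; last first.
  move=> B B' BB'; apply/seteqP; split => w //= [[[h1 _] _] [[h2 _] _]].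
  by move: BB'; rewrite -h1 -h2 eqxx.
transitivity (\sum_(B <- enum {: {set k.-tuple A}})
   (wt B * Esum p (words_lt A k) (fun g => (Pr B g)%:R))%:E)%E.
  apply: eq_bigr => B _; rewrite (@prob_Pr (words_lt A k)) //.
  - by rewrite big_nil mulr1.
  - exact: uniq_words_lt.
  - by rewrite cats0.
by rewrite sumEFin big_enum.
Qed.

End Prob.

Set Implicit Arguments. Unset Strict Implicit.
Local Open Scope classical_set_scope.

Section Vals.
Variables (R : realType) (d : measure_display) (Omega : measurableType d)
  (P : probability Omega R) (A : finType) (p : {set A} -> R)
  (W : seq A -> Omega -> {set A}).
Hypothesis p_ge0 : forall S, 0 <= p S.
Hypothesis p_sum1 : \sum_(S : {set A}) p S = 1.
Hypothesis mW : forall (x : seq A) (S : {set A}), measurable [set w | W x w = S].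
Variables (s : R) (k : nat) (Yk : Omega -> {set k.-tuple A}).
Hypothesis s01 : 0 < s < 1.
Hypothesis mY : forall B, measurable [set w | Yk w = B].
Hypothesis indep : site_percolation_indep P p W s Yk.

Lemma wt_ge0 (B : {set k.-tuple A}) : 0 <= wt s B.
Proof. by case/andP: s01 => s0 s1; rewrite mulr_ge0 // exprn_ge0 // ?subr_ge0 ltW. Qed.

Lemma wt_sum : \sum_(B : {set k.-tuple A}) wt s B = 1.
Proof.
have := perc_sum (finset.set0 : {set k.-tuple A}) s 1.
rewrite cards0 expr0 => <-; apply: eq_bigr => B _; by rewrite expr1n mulr1.
Qed.

Lemma dep_Tg (Q : {set k.-tuple A} -> bool) :
  dep (words_lt A k) (fun g => Q (Tg g k)).
Proof. by move=> g g' H; rewrite (Tg_dep H). Qed.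

Lemma Esum_empty : Esum p (words_lt A k) (fun g => (Tg g k == finset.set0)%:R) =
  iter k (f p) 0.
Proof.
rewrite -(E_iter p_sum1); apply: Esum_ext => g.
by rewrite expr0n cards_eq0.
Qed.

Lemma probE : measurable [set w | GW_level W k w = finset.set0] /\
  P [set w | GW_level W k w = finset.set0] = (iter k (f p) 0)%:E.
Proof.
have -> : [set w | GW_level W k w = finset.set0] =
    [set w | (fun (B : {set k.-tuple A}) g => Tg g k == finset.set0) (Yk w) (fun x => W x w)].
  by apply/seteqP; split => w /=; rewrite GW_Tg => /eqP.
have [mE PE] := prob_event mW mY indep (fun B => dep_Tg (fun T => T == finset.set0)).
split => //; rewrite PE; congr EFin.
under eq_bigr => B _ do rewrite Esum_empty.
by rewrite -mulr_suml wt_sum mul1r.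
Qed.

Variable a : nat.
Hypothesis a0 : (0 < a)%N.

Lemma probZ : let g := fine (P [set w | (#|GW_level W k w :&: Yk w| < a)%N]) in
  iter k (f p) 0 <= g /\ g <= 1 /\
  forall t, 0 <= t -> t <= 1 -> t ^+ a * g <= iter k (f p) (s + (1 - s) * t).
Proof.
have -> : [set w | (#|GW_level W k w :&: Yk w| < a)%N] =
    [set w | (fun (B : {set k.-tuple A}) g => (#|Tg g k :&: B| < a)%N) (Yk w) (fun x => W x w)].
  by apply/seteqP; split => w /=; rewrite GW_Tg.
have [_ PE] := prob_event mW mY indep
  (fun B => dep_Tg (fun T => (#|T :&: B| < a)%N)).
rewrite PE /=.
split.
  apply: (@le_trans _ _ (iter k (f p) 0 * \sum_(B : {set k.-tuple A}) wt s B)).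
    by rewrite wt_sum mulr1.
  rewrite mulr_sumr; apply: ler_sum => B _.
  rewrite -Esum_empty mulrC; apply: ler_wpM2l; first exact: wt_ge0.
  apply: Esum_le => // g; case: eqP => [->|_]; last by case: (_ < _)%N.
  by rewrite finset.set0I cards0 a0.
split.
  apply: (@le_trans _ _ (\sum_(B : {set k.-tuple A}) wt s B)); last by rewrite wt_sum.
  apply: ler_sum => B _; rewrite -[X in _ <= X]mulr1.
  apply: ler_wpM2l; first exact: wt_ge0.
  apply: (@le_trans _ _ (Esum p (words_lt A k) (fun _ => 1))).
    apply: Esum_le => // g; by case: (_ < _)%N.
  by rewrite Esum_const.
move=> t t0 t1; rewrite -(E_iter p_sum1); rewrite mulr_sumr.
rewrite (_ : (fun g => (s + (1 - s) * t) ^+ #|Tg g k|) =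
   (fun g => \sum_(B : {set k.-tuple A}) wt s B * t ^+ #|Tg g k :&: B|)); last first.
  by apply/funext => g; rewrite -perc_sum.
rewrite Esum_sum; apply: ler_sum => B _.
rewrite mulrCA Esum_scale; apply: ler_wpM2l; first exact: wt_ge0.
rewrite -Esum_scale; apply: Esum_le => // g.
case: ltnP => h; last by rewrite mulr0 exprn_ge0.
rewrite mulr1; rewrite -(subnKC (ltnW h)) exprD.
rewrite -[X in _ <= X]mulr1; apply: ler_wpM2l; first exact: exprn_ge0.
exact: exprn_ile1.
Qed.

End Vals.

Unset Implicit Arguments.
Local Open Scope classical_set_scope.

Theorem lemma4p3 (R : realType) (d : measure_display) (Omega : measurableType d)
  (P : probability Omega R) (A : finType) (p : {set A} -> R)
  (W : seq A -> Omega -> {set A})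
  (Y : R -> forall k : nat, Omega -> {set k.-tuple A})
  (a : nat -> nat) :
  (forall S, 0 <= p S) ->
  \sum_(S : {set A}) p S = 1 ->
  (forall i : A, 0 < \sum_(S : {set A} | i \in S) p S) ->
  (forall (x : seq A) (S : {set A}), measurable [set w | W x w = S]) ->
  iid_offspring P p W ->
  (forall s k (B : {set k.-tuple A}), measurable [set w | Y s k w = B]) ->
  (forall s k, 0 < s < 1 -> site_percolation_indep P p W s (Y s k)) ->
  1 < mean_offspring p ->
  (forall k, (0 < a k)%N) ->
  (limn_esup (fun k => (powR (a k)%:R (k%:R)^-1)%:E) < (mean_offspring p)%:E)%E ->
  forall s : R, 0 < s < 1 ->
    (fun k => fine (P [set w | (#|GW_level W k w :&: Y s k w| < a k)%N]))
      @ \oo --> fine (P (GW_extinct W)).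
Proof.
move=> p_ge0 p_sum1 _ mW _ mY indep m1 apos hlim s s01.
have mm1 : 1 < mm p by [].
set q := fine (P (GW_extinct W)).
pose F k := [set w | GW_level W k w = finset.set0].
have hE k := @probE _ _ _ P _ _ _ p_sum1 mW s k _ (mY s k) (indep s k s01).
have Eext : GW_extinct W = \bigcup_k F k.
  by apply/seteqP; split => w /=; [case=> n h; exists n | case=> n _ h; exists n].
have step : forall k w, GW_level W k w = finset.set0 -> GW_level W k.+1 w = finset.set0.
  move=> k w h /=; apply/setP => t; rewrite !inE.
  apply/negbTE/existsP => -[b /existsP[j]]; by rewrite h !inE.
have mono : {homo F : n m / (n <= m)%N >-> (n <= m)%O}.
  move=> n m nm; rewrite subsetEset => w /=.
  elim: m nm => [|m IH]; first by rewrite leqn0 => /eqP ->.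
  rewrite leq_eqVlt => /orP[/eqP -> //|nm] hw; apply: step; exact: IH.
have mU : measurable (\bigcup_k F k) by apply: bigcupT_measurable => k; exact: (hE k).1.
have Pq : P (GW_extinct W) = q%:E.
  by rewrite /q fineK // Eext; apply: fin_num_measure.
have q0 : 0 <= q by rewrite -lee_fin -Pq measure_ge0.
have q1 : q <= 1 by rewrite -lee_fin -Pq; apply: probability_le1; rewrite Eext.
have qcvg : (fun k => iter k (f p) 0) @ \oo --> q.
  have h := @nondecreasing_cvg_mu d Omega R P F (fun k => (hE k).1) mU mono.
  have e1 : (fun k => (iter k (f p) 0)%:E) @ \oo --> q%:E.
    rewrite -Pq Eext (_ : (fun k => (iter k (f p) 0)%:E) = P \o F); first exact: h.
    by apply/funext => k /=; rewrite (hE k).2.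
  move/fine_cvg: e1; rewrite (_ : fine \o _ = fun k => iter k (f p) 0) //.
have qk01 k : 0 <= iter k (f p) 0 /\ iter k (f p) 0 <= 1.
  by apply: iter_f01 => //; lra.
have mm0 : 0 < mm p by lra.
have fq : f p q = q.
  apply/eqP; rewrite -subr_eq0 -normr_le0; apply/ler_addgt0Pr => e e0; rewrite add0r.
  have e'0 : 0 < e / (mm p + 1) by apply: divr_gt0 => //; lra.
  have ee : e / (mm p + 1) * (mm p + 1) = e by rewrite divfK //; apply: lt0r_neq0; lra.
  set e' := e / (mm p + 1) in e'0 ee.
  move/cvgrPdist_le: qcvg => /(_ e' e'0) [N _ HN].
  have := HN N (leqnn N); have := HN N.+1 (leqnSn N).
  rewrite iterS; set z := iter N (f p) 0.
  have [z0 z1] := qk01 N; rewrite -/z in z0 z1.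
  have Hs := f_sub p z q.
  have D0 : 0 <= DD p z q by apply: DD_ge0.
  have D1 : DD p z q <= mm p by rewrite -DD11; apply: DD_mono.
  rewrite !ler_norml => /andP[h1 h2] /andP[h3 h4]; apply/andP; split.
    have : - e' * mm p <= (q - z) * DD p z q.
      case: (lerP 0 (q - z)) => qz; first by nra.
      nra.
    nra.
  have : (q - z) * DD p z q <= e' * mm p.
    case: (lerP 0 (q - z)) => qz; last by nra.
    nra.
  nra.
pose u := fun k => ((a k)%:R `^ (k%:R)^-1)%:E : \bar R.
have [c [Nc [c0 [cm hc]]]] : exists c : R, exists Nc : nat, 0 <= c /\ c < mm p /\
    forall k, (Nc <= k)%N -> ((a k)%:R `^ (k%:R)^-1) <= c.
  move: hlim; rewrite -/(u) limn_esup_lim (cvg_lim _ (@cvg_esups_inf _ u)) //.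
  case/ereal_inf_lt => _ [N _ <-] hN.
  have ub : forall k, (N <= k)%N -> (u k <= esups u N)%E.
    move=> k Nk; apply: ereal_sup_ubound; exists k => //.
  have u0 : forall k, (0 <= u k)%E by move=> k; rewrite lee_fin powR_ge0.
  have fin : esups u N \is a fin_num.
    rewrite ge0_fin_numE; first exact: (lt_trans hN (ltry _)).
    exact: le_trans (u0 N) (ub N (leqnn N)).
  exists (fine (esups u N)), N; split; last split.
  - by rewrite fine_ge0 //; exact: le_trans (u0 N) (ub N (leqnn N)).
  - by rewrite -lte_fin fineK.
  - by move=> k Nk; rewrite -lee_fin fineK //; exact: ub.
have ak k : (maxn Nc 1 <= k)%N -> (a k)%:R <= c ^+ k.
  rewrite geq_max => /andP[hk k0].
  have -> : (a k)%:R = ((a k)%:R `^ (k%:R)^-1) ^+ k :> R.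
    rewrite -powR_mulrn ?powR_ge0 // -powRrM mulVf ?powRr1 //.
    by rewrite pnatr_eq0 -lt0n.
  by apply: powle; [exact: powR_ge0| exact: hc].
pose c1 := Num.max c 1.
have c11 : 1 <= c1 by rewrite le_max lexx orbT.
have cc1 : c <= c1 by rewrite le_max lexx.
have c1m : c1 < mm p by rewrite gt_max cm mm1.
pose m' := (c1 + mm p) / 2.
pose c2 := (c1 + m') / 2.
have m'1 : 1 < m' by rewrite /m'; lra.
have m'm : m' < mm p by rewrite /m'; lra.
have c12 : c1 < c2 by rewrite /c2 /m'; lra.
have c2m : c2 < m' by rewrite /c2 /m'; lra.
have [dl0 [dl1 phib]] := @phi_bound R A p p_ge0 p_sum1 m' m'm.
set dl := Num.min _ _ in dl0 dl1 phib.
have fy : f p (1 - dl) < 1 - dl.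
  have := phib dl (ltW dl0) (lexx dl); nra.
have c20 : 0 < c2 by lra.
have m'0 : 0 < m' by lra.
apply/cvgrPdist_le => e e0.
have e20 : 0 < e / 2 by lra.
have [r hr] := @contract_iter R A p p_ge0 q (1 - dl) q0 q1 fq
   (ltac:(lra)) (ltac:(lra)) fy (e / 2) e20.
move/cvgrPdist_le: qcvg => /(_ e e0) [N1 _ H1].
have g1 : `|c1 / c2| < 1.
  rewrite ger0_norm; last by apply: divr_ge0; lra.
  by rewrite ltr_pdivrMr // mul1r.
have g2 : `|c2 / m'| < 1.
  rewrite ger0_norm; last by apply: divr_ge0; lra.
  by rewrite ltr_pdivrMr // mul1r.
have Mr0 : 0 < m' ^+ r by apply: exprn_gt0.
have bnd0 : 0 < (1 - s) / (dl * m' ^+ r).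
  apply: divr_gt0; first lra.
  by apply: mulr_gt0.
have := @cvg_expr R (c1 / c2) g1 => /cvgrPdist_lt/(_ (e / 2) e20) [N2 _ H2].
have := @cvg_expr R (c2 / m') g2 => /cvgrPdist_lt/(_ _ bnd0) [N3 _ H3].
exists (maxn Nc 1 + N1 + N2 + N3 + r)%N => // k /= hk.
have hk1 : (N1 <= k)%N by clear -hk; lia.
have hk2 : (N2 <= k)%N by clear -hk; lia.
have hk3 : (N3 <= k)%N by clear -hk; lia.
have hkr : (r <= k)%N by clear -hk; lia.
have hka : (maxn Nc 1 <= k)%N by clear -hk; lia.
have := probZ p_ge0 p_sum1 mW s01 (mY s k) (indep s k s01) (apos k).
move=> /= [lo [hi up]].
set g := fine _ in lo hi up *.
have Hq := H1 k hk1; have Hc1 := H2 k hk2; have Hc2 := H3 k hk3.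
rewrite /= sub0r normrN ger0_norm in Hc1; last by apply: exprn_ge0; apply: divr_ge0; lra.
rewrite /= sub0r normrN ger0_norm in Hc2; last by apply: exprn_ge0; apply: divr_ge0; lra.
have [s0 s1] : 0 < s /\ s < 1 by move/andP: s01.
pose C := c2 ^+ k.
have C0 : 0 < C by apply: exprn_gt0.
pose eps := C^-1.
have eps0 : 0 < eps by rewrite invr_gt0.
have eps1 : eps <= 1.
  rewrite invf_le1 //; apply: exprn_ege1; lra.
have t0 : 0 <= 1 - eps by lra.
have t1 : 1 - eps <= 1 by lra.
have Hup := up (1 - eps) t0 t1.
rewrite (_ : s + (1 - s) * (1 - eps) = 1 - (1 - s) * eps) in Hup; last by ring.
have x0 : 0 <= (1 - s) * eps by apply: mulr_ge0; lra.
have x1 : (1 - s) * eps <= 1 by nra.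
pose M1 := m' ^+ (k - r).
have M10 : 0 < M1 by apply: exprn_gt0.
have HZ : (c2 / m') ^+ k = C / (M1 * m' ^+ r).
  by rewrite expr_div_n /M1 -exprD subnK.
rewrite HZ ltr_pdivlMr in Hc2; last by apply: mulr_gt0.
have dx : dl <= m' ^+ (k - r) * ((1 - s) * eps).
  rewrite -/M1 mulrA ler_pdivlMr //.
  have : C * dl = (C / (M1 * m' ^+ r) * (dl * m' ^+ r)) * M1.
    by field; apply/andP; split; apply: lt0r_neq0.
  nra.
have gr := @growth R A p p_ge0 p_sum1 m' dl ((1 - s) * eps) (ltW m'1) dl0 dl1 phib
   x0 x1 (k - r) dx.
have [i0 i1] := iter_f01 p_ge0 p_sum1 (k - r) (ltac:(lra) : 0 <= 1 - (1 - s) * eps)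
   (ltac:(lra)).
have Hit : iter k (f p) (1 - (1 - s) * eps) <= q + e / 2.
  rewrite -(subnKC hkr) iterD.
  apply: le_trans hr; apply: iter_mono => //.
have bl := @bern_lo R (a k) eps (ltW eps0) eps1.
have aeps : (a k)%:R * eps <= (c1 / c2) ^+ k.
  rewrite expr_div_n; apply: ler_wpM2r; first by rewrite invr_ge0 ltW.
  apply: le_trans (ak k hka) _; apply: powle => //.
have ta1 : (1 - eps) ^+ a k <= 1 by apply: exprn_ile1.
have g0 : 0 <= g by apply: le_trans lo; exact: (qk01 k).1.
have : (1 - (1 - eps) ^+ a k) * g <= (1 - (1 - eps) ^+ a k) * 1.
  by apply: ler_wpM2l => //; lra.
move=> hh.
rewrite ler_norml; apply/andP; split; first lra.
rewrite ler_norml in Hq; case/andP: Hq => Hq1 Hq2; lra.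
Qed.
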